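(* In the logic $\mathsf{LC}$ (intuitionistic propositional logic extended with $(p\to q)\vee(q\to p)$, algebraized by Gödel algebras), the Takeuti–Titani (density) $\Pi_2$-rule $$\frac{\forall r\,\big(g\to((p\to r)\vee(r\to q)\vee c)\big)}{g\to((p\to q)\vee c)}$$ is admissible. Moreover, the uniform post-interpolant of $g\to((p\to r)\vee(r\to q)\vee c)$ with respect to $r$ (i.e. the formula $\forall_r$ of it, a formula in $g,p,q,c$ that is the strongest consequence-free-of-$r$ from below: for any $\Sigma$ not containing $r$, $\Sigma\vdash$ the formula iff $\Sigma\vdash$ the interpolant) is equivalent in $\mathsf{LC}$ to $g\to((p\to q)\vee c)$.
   Context: A $\Pi_2$-rule $\forall\overline p\,\Gamma/^2\phi$ (with $\phi$ not containing $\overline p$) is admissible over a logic $\vdash$ iff for every substitution $\sigma$ which fixes each variable of $\overline p$ and maps every other variable to a formula not containing variables of $\overline p$, $\vdash\sigma(\Gamma)$ implies $\vdash\sigma(\phi)$. Here $g,p,q,c,r$ are distinct propositional variables. *)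

(* Defs.v *)
From Stdlib Require Import List.

Inductive form : Type :=
| Var : nat -> form
| Bot : form
| And : form -> form -> form
| Or  : form -> form -> form
| Imp : form -> form -> form.

Fixpoint occurs (x : nat) (a : form) : Prop :=
  match a with
  | Var y => x = y
  | Bot => False
  | And a b | Or a b | Imp a b => occurs x a \/ occurs x b
  end.

Fixpoint subst (s : nat -> form) (a : form) : form :=
  match a with
  | Var y => s y
  | Bot => Bot
  | And a b => And (subst s a) (subst s b)
  | Or a b => Or (subst s a) (subst s b)
  | Imp a b => Imp (subst s a) (subst s b)
  end.

(* Hilbert-style axiomatization of LC = IPC + (a -> b) \/ (b -> a),
   given by axiom schemes (hence closed under substitution) and modus ponens. *)
Inductive LC_axiom : form -> Prop :=
| ax_K  a b   : LC_axiom (Imp a (Imp b a))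
| ax_S  a b c : LC_axiom (Imp (Imp a (Imp b c)) (Imp (Imp a b) (Imp a c)))
| ax_A1 a b   : LC_axiom (Imp (And a b) a)
| ax_A2 a b   : LC_axiom (Imp (And a b) b)
| ax_AI a b   : LC_axiom (Imp a (Imp b (And a b)))
| ax_O1 a b   : LC_axiom (Imp a (Or a b))
| ax_O2 a b   : LC_axiom (Imp b (Or a b))
| ax_OE a b c : LC_axiom (Imp (Imp a c) (Imp (Imp b c) (Imp (Or a b) c)))
| ax_EFQ a    : LC_axiom (Imp Bot a)
| ax_LIN a b  : LC_axiom (Or (Imp a b) (Imp b a)).

Inductive LC_der (Gamma : form -> Prop) : form -> Prop :=
| der_hyp a : Gamma a -> LC_der Gamma a
| der_ax a : LC_axiom a -> LC_der Gamma a
| der_mp a b : LC_der Gamma (Imp a b) -> LC_der Gamma a -> LC_der Gamma b.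

Definition LC_thm (a : form) : Prop := LC_der (fun _ => False) a.

Definition TT_premise (g p q c r : nat) : form :=
  Imp (Var g) (Or (Or (Imp (Var p) (Var r)) (Imp (Var r) (Var q))) (Var c)).

Definition TT_conclusion (g p q c : nat) : form :=
  Imp (Var g) (Or (Imp (Var p) (Var q)) (Var c)).

Definition Pi2_admissible (r : nat) (premise concl : form) : Prop :=
  forall s : nat -> form,
    s r = Var r ->
    (forall x, x <> r -> ~ occurs r (s x)) ->
    LC_thm (subst s premise) -> LC_thm (subst s concl).

Definition uniform_post_interpolant (r : nat) (phi psi : form) : Prop :=
  ~ occurs r psi /\
  forall Sigma : form -> Prop,
    (forall s, Sigma s -> ~ occurs r s) ->
    (LC_der Sigma phi <-> LC_der Sigma psi).

(* Main.v *)
Require Import Defs.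
From Stdlib Require Import Classical ClassicalEpsilon Arith Lia Cantor.

Definition ext (G : form -> Prop) a := fun x => G x \/ x = a.

Lemma der_mono G D a : LC_der G a -> (forall x, G x -> D x) -> LC_der D a.
Proof. induction 1; intros HH; [apply der_hyp; auto | apply der_ax; auto | eapply der_mp; eauto]. Qed.

Lemma der_I G a : LC_der G (Imp a a).
Proof.
  eapply der_mp. eapply der_mp. apply der_ax, (ax_S a (Imp a a) a). apply der_ax, ax_K. apply der_ax, (ax_K a a).
Qed.

Lemma deduction G a b : LC_der (ext G a) b -> LC_der G (Imp a b).
Proof.
  induction 1 as [x Hx|x Hx|x y _ IH1 _ IH2].
  - destruct Hx as [Hx| ->]. eapply der_mp. apply der_ax, ax_K. apply der_hyp; auto. apply der_I.
  - eapply der_mp. apply der_ax, ax_K. apply der_ax; auto.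
  - eapply der_mp. eapply der_mp. apply der_ax, ax_S. exact IH1. exact IH2.
Qed.

Lemma hyp_new G a : LC_der (ext G a) a.
Proof. apply der_hyp; right; auto. Qed.
Lemma wk G a b : LC_der G b -> LC_der (ext G a) b.
Proof. intros; eapply der_mono; eauto; unfold ext; auto. Qed.
Lemma mp G a b : LC_der G (Imp a b) -> LC_der G a -> LC_der G b.
Proof. exact (der_mp G a b). Qed.
Lemma and_i G a b : LC_der G a -> LC_der G b -> LC_der G (And a b).
Proof. intros; eapply mp; [eapply mp; [apply der_ax, ax_AI|]|]; eauto. Qed.
Lemma and_e1 G a b : LC_der G (And a b) -> LC_der G a.
Proof. intros; eapply mp; [apply der_ax, ax_A1|]; eauto. Qed.
Lemma and_e2 G a b : LC_der G (And a b) -> LC_der G b.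
Proof. intros; eapply mp; [apply der_ax, ax_A2|]; eauto. Qed.
Lemma or_i1 G a b : LC_der G a -> LC_der G (Or a b).
Proof. intros; eapply mp; [apply der_ax, ax_O1|]; eauto. Qed.
Lemma or_i2 G a b : LC_der G b -> LC_der G (Or a b).
Proof. intros; eapply mp; [apply der_ax, ax_O2|]; eauto. Qed.
Lemma or_e G a b c : LC_der G (Or a b) -> LC_der G (Imp a c) -> LC_der G (Imp b c) -> LC_der G c.
Proof. intros H1 H2 H3. eapply mp; [eapply mp; [eapply mp; [apply der_ax, ax_OE|exact H2]|exact H3]|exact H1]. Qed.
Lemma efq G a : LC_der G Bot -> LC_der G a.
Proof. intros; eapply mp; [apply der_ax, ax_EFQ|]; eauto. Qed.
Lemma lin G a b : LC_der G (Or (Imp a b) (Imp b a)).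
Proof. apply der_ax, ax_LIN. Qed.
Lemma imp_trans G a b c : LC_der G (Imp a b) -> LC_der G (Imp b c) -> LC_der G (Imp a c).
Proof. intros. apply deduction. eapply mp. apply wk; eauto. eapply mp. apply wk; eauto. apply hyp_new. Qed.
Lemma imp_K G a b : LC_der G b -> LC_der G (Imp a b).
Proof. intros; apply deduction, wk; auto. Qed.

Fixpoint code (a : form) : nat :=
  match a with
  | Var n => to_nat (0, n)
  | Bot => to_nat (1, 0)
  | And a b => to_nat (2, to_nat (code a, code b))
  | Or a b => to_nat (3, to_nat (code a, code b))
  | Imp a b => to_nat (4, to_nat (code a, code b))
  end.

Lemma to_nat_inj p1 p2 : to_nat p1 = to_nat p2 -> p1 = p2.
Proof. intros H. rewrite <- (cancel_of_to p1), <- (cancel_of_to p2), H. reflexivity. Qed.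

Opaque to_nat.
Lemma code_inj a b : code a = code b -> a = b.
Proof.
  revert b; induction a; destruct b; cbn [code]; intros H; apply to_nat_inj in H;
  try discriminate; try reflexivity; injection H as H0; subst; auto;
  try (apply to_nat_inj in H0; injection H0 as H1 H2; f_equal; auto).
Qed.

Definition enum (n : nat) : form :=
  match excluded_middle_informative (exists a, code a = n) with
  | left H => proj1_sig (constructive_indefinite_description _ H)
  | right _ => Bot
  end.

Lemma enum_code a : enum (code a) = a.
Proof.
  unfold enum. destruct excluded_middle_informative as [H|H].
  - destruct constructive_indefinite_description as [b Hb]; simpl. apply code_inj; auto.
  - exfalso; apply H; eauto.
Qed.

Section Lind.
Variable Sigma : form -> Prop.
Variable phi : form.

Fixpoint Tn (n : nat) : form -> Prop :=
  match n with
  | 0 => Sigma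
  | S n => fun a => Tn n a \/ (a = enum n /\ ~ LC_der (ext (Tn n) (enum n)) phi)
  end.

Definition Tw a := exists n, Tn n a.

Lemma Tn_mono n m : n <= m -> forall a, Tn n a -> Tn m a.
Proof. induction 1; simpl; auto. Qed.

Lemma Tn_cons (H : ~ LC_der Sigma phi) n : ~ LC_der (Tn n) phi.
Proof.
  induction n; simpl; auto.
  destruct (classic (LC_der (ext (Tn n) (enum n)) phi)) as [H1|H1].
  - intro D; apply IHn. eapply der_mono; eauto. intros x [Hx|[_ Hx]]; tauto.
  - intro D; apply H1. eapply der_mono; eauto. intros x [Hx|[ -> _]]; unfold ext; auto.
Qed.

Lemma Tw_compact a : LC_der Tw a -> exists n, LC_der (Tn n) a.
Proof.
  induction 1 as [x [n Hx]|x Hx|x y _ [n1 H1] _ [n2 H2]].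
  - exists n; apply der_hyp; auto.
  - exists 0; apply der_ax; auto.
  - exists (max n1 n2). eapply der_mp; eapply der_mono; eauto; apply Tn_mono; lia.
Qed.

Lemma Tw_cons (H : ~ LC_der Sigma phi) : ~ LC_der Tw phi.
Proof. intros D. destruct (Tw_compact _ D) as [n Hn]. eapply Tn_cons; eauto. Qed.

Lemma Tw_max a : Tw a \/ LC_der (ext Tw a) phi.
Proof.
  destruct (classic (LC_der (ext (Tn (code a)) a) phi)) as [H1|H1].
  - right. eapply der_mono; eauto. intros x [Hx|Hx]; [left; exists (code a)|right]; auto.
  - left. exists (S (code a)). simpl. right. rewrite enum_code. auto.
Qed.

Lemma Tw_sub a : Sigma a -> Tw a.
Proof. intros; exists 0; auto. Qed.

Lemma Tw_prime (H : ~ LC_der Sigma phi) x y : LC_der Tw (Or x y) -> LC_der Tw x \/ LC_der Tw y.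
Proof.
  intros D. apply NNPP; intros N.
  destruct (Tw_max x) as [Hx|Hx]; [apply N; left; apply der_hyp; auto|].
  destruct (Tw_max y) as [Hy|Hy]; [apply N; right; apply der_hyp; auto|].
  apply (Tw_cons H). eapply or_e; eauto; apply deduction; auto.
Qed.
End Lind.

Definition prime (T : form -> Prop) := forall x y, LC_der T (Or x y) -> LC_der T x \/ LC_der T y.

Lemma lindenbaum Sigma phi : ~ LC_der Sigma phi ->
  exists T, (forall a, Sigma a -> T a) /\ ~ LC_der T phi /\ prime T.
Proof.
  intros H. exists (Tw Sigma phi). split; [apply Tw_sub|]. split; [apply Tw_cons; auto|].
  intros x y; apply Tw_prime; auto.
Qed.

Record chain := { V :> Type; le : V -> V -> Prop; le_refl : forall x, le x x;
  le_trans : forall x y z, le x y -> le y z -> le x z; le_total : forall x y, le x y \/ le y x;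
  top : V; bot : V; top_max : forall x, le x top; bot_min : forall x, le bot x }.

Definition dec (P : Prop) : {P} + {~P} := excluded_middle_informative P.

Fixpoint eval (C : chain) (v : nat -> C) (a : form) : C :=
  match a with
  | Var x => v x
  | Bot => bot C
  | And a b => if dec (le C (eval C v a) (eval C v b)) then eval C v a else eval C v b
  | Or a b => if dec (le C (eval C v a) (eval C v b)) then eval C v b else eval C v a
  | Imp a b => if dec (le C (eval C v a) (eval C v b)) then top C else eval C v b
  end.

Definition valid C v a := le C (top C) (eval C v a).

Ltac destr_dec :=
  repeat match goal with
  | |- context [dec ?P] => lazymatch P with context [dec _] => fail | _ => destruct (dec P) end
  | H : context [dec ?P] |- _ => lazymatch P with context [dec _] => fail | _ => destruct (dec P) end
  end.

Ltac add_total C :=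
  repeat match goal with
  | H : ~ le C ?x ?y |- _ =>
      lazymatch goal with _ : le C y x |- _ => fail | _ => assert (le C y x) by (destruct (le_total C x y); tauto) end
  end.

Ltac add_tb C :=
  repeat match goal with
  | H : le C ?x _ |- _ =>
      lazymatch goal with _ : le C x (top C) |- _ => fail | _ => pose proof (top_max C x) end
  | H : le C _ ?x |- _ =>
      lazymatch goal with _ : le C x (top C) |- _ => fail | _ => pose proof (top_max C x) end
  | H : ~ le C ?x _ |- _ =>
      lazymatch goal with _ : le C x (top C) |- _ => fail | _ => pose proof (top_max C x) end
  | H : ~ le C _ ?x |- _ =>
      lazymatch goal with _ : le C x (top C) |- _ => fail | _ => pose proof (top_max C x) end
  end;
  repeat match goal with
  | H : le C ?x _ |- _ =>
      lazymatch goal with _ : le C (bot C) x |- _ => fail | _ => pose proof (bot_min C x) end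
  | H : le C _ ?x |- _ =>
      lazymatch goal with _ : le C (bot C) x |- _ => fail | _ => pose proof (bot_min C x) end
  end.

Ltac trans_close C :=
  repeat match goal with
  | H1 : le C ?x ?y, H2 : le C ?y ?z |- _ =>
      lazymatch goal with _ : le C x z |- _ => fail | _ => pose proof (le_trans C x y z H1 H2) end
  end.

Ltac chain_crush C :=
  destr_dec; try (apply NNPP; intro);
  add_total C; add_tb C; trans_close C;
  solve [match goal with
  | H : ~ ?P, H2 : ?P |- _ => exact (H H2)
  | H : ~ le C ?x ?x |- _ => exact (H (le_refl C x))
  end].

Lemma sound_ax C v a : LC_axiom a -> valid C v a.
Proof.
  unfold valid; destruct 1; simpl; chain_crush C.
Qed.

Lemma soundness C v G a : LC_der G a -> (forall b, G b -> valid C v b) -> valid C v a.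
Proof.
  induction 1 as [x Hx|x Hx|x y _ IH1 _ IH2]; intros HG; auto.
  - apply sound_ax; auto.
  - specialize (IH1 HG); specialize (IH2 HG). unfold valid in *; simpl in *.
    chain_crush C.
Qed.

Lemma or_imp G a b c : LC_der G (Imp a c) -> LC_der G (Imp b c) -> LC_der G (Imp (Or a b) c).
Proof. intros; eapply mp; [eapply mp; [apply der_ax, ax_OE|]|]; eauto. Qed.
Lemma and_imp G x a b : LC_der G (Imp x a) -> LC_der G (Imp x b) -> LC_der G (Imp x (And a b)).
Proof. intros H1 H2. apply deduction. apply and_i; (eapply mp; [apply wk; eauto|apply hyp_new]). Qed.

Section Canon.
Variable T : form -> Prop.
Hypothesis Tp : prime T.
Definition cle a b := LC_der T (Imp a b).
Lemma cle_total a b : cle a b \/ cle b a.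
Proof. apply Tp, lin. Qed.
Lemma cle_trans a b c : cle a b -> cle b c -> cle a c.
Proof. apply imp_trans. Qed.
Lemma cle_top a : cle a (Imp Bot Bot).
Proof. apply imp_K, der_I. Qed.
Lemma cle_bot a : cle Bot a.
Proof. apply der_ax, ax_EFQ. Qed.

Definition canon : chain := {| V := form; le := cle; le_refl := fun x => der_I T x;
  le_trans := cle_trans; le_total := cle_total; top := Imp Bot Bot; bot := Bot;
  top_max := cle_top; bot_min := cle_bot |}.

Lemma truth a : cle (eval canon Var a) a /\ cle a (eval canon Var a).
Proof.
  induction a as [x| |a IHa b IHb|a IHa b IHb|a IHa b IHb]; simpl.
  - split; apply der_I.
  - split; apply der_I.
  - destruct IHa as [Ha1 Ha2], IHb as [Hb1 Hb2].
    destruct dec as [l|l]; simpl in l.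
    + split. apply and_imp; auto. eapply cle_trans; eauto.
      eapply cle_trans; [apply der_ax, ax_A1|auto].
    + assert (l' : cle (eval canon Var b) (eval canon Var a)) by (destruct (cle_total (eval canon Var a) (eval canon Var b)); tauto).
      split. apply and_imp; auto. eapply cle_trans; eauto.
      eapply cle_trans; [apply der_ax, ax_A2|auto].
  - destruct IHa as [Ha1 Ha2], IHb as [Hb1 Hb2].
    destruct dec as [l|l]; simpl in l.
    + split. eapply cle_trans; [eauto|apply der_ax, ax_O2].
      apply or_imp; auto. eapply cle_trans; eauto.
    + assert (l' : cle (eval canon Var b) (eval canon Var a)) by (destruct (cle_total (eval canon Var a) (eval canon Var b)); tauto).
      split. eapply cle_trans; [eauto|apply der_ax, ax_O1].
      apply or_imp; auto. eapply cle_trans; eauto.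
  - destruct IHa as [Ha1 Ha2], IHb as [Hb1 Hb2].
    destruct dec as [l|l]; simpl in l.
    + split. apply imp_K. eapply cle_trans; [eauto|]. eapply cle_trans; eauto.
      apply imp_K, der_I.
    + split. eapply cle_trans; [eauto|apply der_ax, ax_K].
      assert (Hn : ~ LC_der T (Imp a b)).
      { intro D. apply l. eapply cle_trans; [eauto|]. eapply cle_trans; eauto. }
      destruct (Tp _ _ (lin T (Imp a b) a)) as [H1|H1].
      * eapply cle_trans; [|eauto]. apply deduction.
        eapply mp. apply hyp_new. eapply mp. apply wk; eauto. apply hyp_new.
      * exfalso; apply Hn. apply deduction. eapply mp. eapply mp. apply wk; eauto.
        apply hyp_new. apply hyp_new.
Qed.

Lemma canon_valid a : valid canon Var a <-> LC_der T a.
Proof.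
  unfold valid; simpl. destruct (truth a) as [H1 H2]. split; intros H.
  - eapply mp; [eauto|]. eapply mp; [eauto|]. apply der_I.
  - apply imp_K. eapply mp; eauto.
Qed.
End Canon.

Section Ext.
Variable C : chain.
Variable q : C.
Hypothesis Hq : ~ le C (top C) q.

Definition ole (x y : option C) : Prop :=
  match x, y with
  | Some x, Some y => le C x y
  | Some x, None => le C x q
  | None, Some y => ~ le C y q
  | None, None => True
  end.

Lemma ole_refl x : ole x x.
Proof. destruct x; simpl; auto. apply le_refl. Qed.
Lemma ole_trans x y z : ole x y -> ole y z -> ole x z.
Proof.
  destruct x as [x|], y as [y|], z as [z|]; simpl; intros H1 H2; auto.
  all: try solve [eapply le_trans; eauto].
  all: try solve [intro H3; apply H1; eapply le_trans; eauto].
  all: try solve [intro H3; apply H2; eapply le_trans; eauto].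
  all: try solve [destruct (le_total C y q); [contradiction|]; eapply le_trans; eauto].
  all: try solve [destruct (le_total C y q) as [H4|H4]; [contradiction|]; intro H3; apply H1; eapply le_trans; eauto].
  all: try solve [destruct (le_total C z q) as [H4|H4]; [contradiction|]; eapply le_trans; eauto].
Qed.
Lemma ole_total x y : ole x y \/ ole y x.
Proof.
  destruct x as [x|], y as [y|]; simpl; auto.
  all: first [apply le_total | destruct (classic (le C x q)); auto | destruct (classic (le C y q)); auto].
Qed.
Lemma ole_top x : ole x (Some (top C)).
Proof. destruct x; simpl; auto. apply top_max. Qed.
Lemma ole_bot x : ole (Some (bot C)) x.
Proof. destruct x; simpl; apply bot_min. Qed.

Definition echain : chain := {| V := option C; le := ole; le_refl := ole_refl;
  le_trans := ole_trans; le_total := ole_total; top := Some (top C); bot := Some (bot C);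
  top_max := ole_top; bot_min := ole_bot |}.

Lemma eval_embed v a : eval echain (fun x => Some (v x)) a = Some (eval C v a).
Proof.
  induction a; simpl; auto; rewrite IHa1, IHa2;
  destr_dec; simpl in *; tauto.
Qed.
End Ext.

Lemma eval_ext C v w a : (forall x, occurs x a -> v x = w x) -> eval C v a = eval C w a.
Proof.
  induction a; simpl; intros H; auto;
  rewrite IHa1, IHa2; auto.
Qed.

Ltac crush2 C :=
  try (apply NNPP; intro);
  add_total C; add_tb C; trans_close C;
  solve [match goal with
  | H : ~ ?P, H2 : ?P |- _ => exact (H H2)
  | H : ~ le C ?x ?x |- _ => exact (H (le_refl C x))
  end].

Lemma get_hq C v G P Q Cf : ~ valid C v (Imp G (Or (Imp P Q) Cf)) -> ~ le C (top C) (eval C v Q).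
Proof.
  unfold valid; cbn [eval]. intros Hv H. apply Hv. destr_dec; crush2 C.
Qed.

Lemma ext_refute C v G P Q Cf r (Hq : ~ le C (top C) (eval C v Q)) (w : nat -> echain C _ Hq) :
  w r = None -> eval _ w G = Some (eval C v G) -> eval _ w P = Some (eval C v P) ->
  eval _ w Q = Some (eval C v Q) -> eval _ w Cf = Some (eval C v Cf) ->
  ~ valid C v (Imp G (Or (Imp P Q) Cf)) ->
  ~ valid _ w (Imp G (Or (Or (Imp P (Var r)) (Imp (Var r) Q)) Cf)).
Proof.
  unfold valid; cbn [eval]. intros E1 E2 E3 E4 E5 Hv H. rewrite E1, E2, E3, E4, E5 in H.
  apply Hv. destr_dec; simpl in *; crush2 C.
Qed.

Lemma key Sigma G P Q Cf r :
  (forall s, Sigma s -> ~ occurs r s) -> ~ occurs r G -> ~ occurs r P -> ~ occurs r Q -> ~ occurs r Cf ->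
  LC_der Sigma (Imp G (Or (Or (Imp P (Var r)) (Imp (Var r) Q)) Cf)) ->
  LC_der Sigma (Imp G (Or (Imp P Q) Cf)).
Proof.
  intros HS HG HP HQ HC D. apply NNPP; intro N.
  destruct (lindenbaum _ _ N) as [T [Hsub [Hn Tp]]].
  assert (Hv : ~ valid (canon T Tp) Var (Imp G (Or (Imp P Q) Cf))) by (rewrite canon_valid; auto).
  pose proof (get_hq _ _ _ _ _ _ Hv) as Hq.
  pose (w := (fun x => if Nat.eq_dec x r then None else Some (Var x)) : nat -> V (echain _ _ Hq)).
  assert (Emb : forall a, ~ occurs r a -> eval _ w a = Some (eval (canon T Tp) Var a)).
  { intros a Ha. rewrite <- (eval_embed _ _ Hq). apply eval_ext. intros x Hx. unfold w.
    destruct (Nat.eq_dec x r); auto. subst; contradiction. }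
  apply (ext_refute _ _ G P Q Cf r Hq w); auto.
  - unfold w; destruct (Nat.eq_dec r r); congruence.
  - apply (soundness _ w Sigma); auto.
    intros b Hb. unfold valid. rewrite Emb; auto. simpl.
    apply (proj2 (canon_valid T Tp b)). apply der_hyp; auto.
Qed.

Lemma conc_prem Gm P Q Cf R :
  LC_der Gm (Imp (Or (Imp P Q) Cf) (Or (Or (Imp P R) (Imp R Q)) Cf)).
Proof.
  apply or_imp.
  - apply deduction. eapply or_e. apply (lin _ P R).
    + eapply imp_trans; apply der_ax, ax_O1.
    + apply deduction. apply or_i1, or_i2. eapply imp_trans. apply hyp_new. apply wk, hyp_new.
  - apply der_ax, ax_O2.
Qed.
Theorem mainTheorem11 (g p q c r : nat) :
  g <> p -> g <> q -> g <> c -> g <> r ->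
  p <> q -> p <> c -> p <> r ->
  q <> c -> q <> r -> c <> r ->
  Pi2_admissible r (TT_premise g p q c r) (TT_conclusion g p q c) /\
  uniform_post_interpolant r (TT_premise g p q c r) (TT_conclusion g p q c).
Proof.
  intros Hgp Hgq Hgc Hgr Hpq Hpc Hpr Hqc Hqr Hcr. split.
  - intros s Hr Hs D. unfold LC_thm, TT_premise, TT_conclusion in *; simpl in *.
    rewrite Hr in D. apply key with (r := r); auto.
    all: apply Hs; auto.
  - split.
    + unfold TT_conclusion; simpl. intuition congruence.
    + intros Sigma HS. unfold TT_premise, TT_conclusion. split; intros D.
      * apply key with (r := r); auto; simpl; congruence.
      * apply deduction. eapply mp. apply conc_prem. eapply mp. apply wk, D. apply hyp_new.
Qed.
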